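(* Let $\mathfrak{g}_1,\dots,\mathfrak{g}_n$ be characteristically nilpotent Lie algebras which are $S$-algebras. Then $\mathfrak{g}_1\underline{\times}\mathfrak{g}_2\underline{\times}\cdots\underline{\times}\mathfrak{g}_n$ is a characteristically nilpotent Lie algebra.
   Context: All Lie algebras are finite-dimensional, complex, nilpotent and nonabelian. $C^1\mathfrak{g}=[\mathfrak{g},\mathfrak{g}]$. A nilpotent $\mathfrak{g}$ is characteristically nilpotent if $\mathfrak{g}^{[m]}=0$ for some $m$, where $\mathfrak{g}^{[1]}=\{f(Y): f\in\mathrm{Der}(\mathfrak{g}),Y\in\mathfrak{g}\}$ and $\mathfrak{g}^{[k]}=\mathrm{Der}(\mathfrak{g})(\mathfrak{g}^{[k-1]})$. Product by generators: for $\mathfrak{g}_1,\mathfrak{g}_2$ of dimensions $m_1,m_2$ take bases $\{X_1,\dots,X_{m_1}\}$, $\{X'_1,\dots,X'_{m_2}\}$ such that $X_1,\dots,X_{n_1}$ generate $\mathfrak{g}_1$ and $X_{n_1+1},\dots,X_{m_1}$ span $C^1\mathfrak{g}_1$, and similarly for $\mathfrak{g}_2$ with $n_2$ generators. $\mathfrak{g}_1\underline{\times}\mathfrak{g}_2$ is the Lie algebra on $\mathfrak{g}_1\oplus\mathfrak{g}_2\oplus\mathfrak{g}_3$, $\mathfrak{g}_3=\langle Z_1,\dots,Z_{n_1n_2}\rangle$, with the brackets of $\mathfrak{g}_1$ and of $\mathfrak{g}_2$, $[X_i,X'_j]=Z_{(i-1)n_2+j}$ for $i\le n_1$, $j\le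 n_2$, $[X_i,X'_j]=0$ otherwise, and $\mathfrak{g}_3$ central; its generators are $X_1,\dots,X_{n_1},X'_1,\dots,X'_{n_2}$. Iterated products are formed successively, $\mathfrak{g}_1\underline{\times}\cdots\underline{\times}\mathfrak{g}_k=(\mathfrak{g}_1\underline{\times}\cdots\underline{\times}\mathfrak{g}_{k-1})\underline{\times}\mathfrak{g}_k$. For $D$ a derivation of $\mathfrak{g}_1\underline{\times}\mathfrak{g}_2$ write $D_{21}=p_2D|_{\mathfrak{g}_1}$ with $p_2$ the projection onto $\mathfrak{g}_2$. A nilpotent Lie algebra $\mathfrak{g}_1$ is an $S$-algebra if for every Lie algebra $\mathfrak{g}_2$ and every derivation $D$ of $\mathfrak{g}_1\underline{\times}\mathfrak{g}_2$ one has $D_{21}(\mathfrak{g}_1)\subset C^1\mathfrak{g}_2$. *)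

(* Defs.v *)
From HB Require Import structures.
From mathcomp Require Import all_boot all_order all_algebra.
From mathcomp Require Import complex.
From mathcomp Require Import reals.
Set Implicit Arguments. Unset Strict Implicit. Unset Printing Implicit Defensive.
Import Order.TTheory GRing.Theory Num.Theory.
Local Open Scope ring_scope.

(* A finite-dimensional Lie algebra over K, given in coordinates with respect
   to a chosen ordered basis X_1,...,X_(lg+lr): the first [lg] basis vectors are
   the chosen generators, the last [lr] are meant to span C^1 g. *)
Record lieb (K : fieldType) := Lieb {
  lg : nat;
  lr : nat;
  lbr : 'rV[K]_(lg + lr) -> 'rV[K]_(lg + lr) -> 'rV[K]_(lg + lr) }.

Section LieDefs.
Variable K : fieldType.
Implicit Types L : lieb K.

Notation V L := 'rV[K]_(lg L + lr L).

Definition is_lie L : Prop :=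
  [/\ (forall (a : K) (x y z : V L), lbr (a *: x + y) z = a *: lbr x z + lbr y z),
      (forall (a : K) (x y z : V L), lbr z (a *: x + y) = a *: lbr z x + lbr z y),
      (forall x : V L, lbr x x = 0) &
      (forall x y z : V L,
          lbr x (lbr y z) + lbr y (lbr z x) + lbr z (lbr x y) = 0)].

Definition inC1 L (v : V L) : Prop :=
  exists (k : nat) (a : 'I_k -> K) (xs ys : 'I_k -> V L),
    v = \sum_(i < k) a i *: lbr (xs i) (ys i).

(* the basis is adapted: the last lr basis vectors span C^1 g
   (i.e. C^1 g is exactly the set of vectors with zero generator coordinates);
   for nilpotent g the first lg basis vectors then generate g *)
Definition adapted L : Prop :=
  forall v : V L, inC1 v <-> lsubmx v = 0.

Definition nilpotent L : Prop :=
  exists N : nat, forall (xs : seq (V L)) (y : V L),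
    size xs = N -> foldr (@lbr K L) y xs = 0.

Definition nonabelian L : Prop := exists x y : V L, lbr x y != 0.

Definition is_der L (D : 'M[K]_(lg L + lr L)) : Prop :=
  forall x y : V L, lbr x y *m D = lbr (x *m D) y + lbr x (y *m D).

Fixpoint charseq L (k : nat) (v : V L) : Prop :=
  match k with
  | 0 => True
  | k'.+1 => exists (D : 'M[K]_(lg L + lr L)) (Y : V L),
               [/\ is_der D, charseq k' Y & v = Y *m D]
  end.

Definition char_nilpotent L : Prop :=
  exists m : nat, forall v : V L, charseq m v -> v = 0.

(* The basis of g1 x g2 is ordered as
     X_1..X_n1, X'_1..X'_n2 (generators),
     X_(n1+1)..X_m1, X'_(n2+1)..X'_m2, Z_1..Z_(n1 n2)
   with Z_((i-1) n2 + j) = [X_i, X'_j] (mxvec_index i j). *)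
Section Product.
Variables L1 L2 : lieb K.
Local Notation n1 := (lg L1). Local Notation r1 := (lr L1).
Local Notation n2 := (lg L2). Local Notation r2 := (lr L2).
Local Notation W := 'rV[K]_((n1 + n2) + (r1 + r2 + n1 * n2)).

Definition pr1 (x : W) : V L1 :=
  row_mx (lsubmx (lsubmx x)) (lsubmx (lsubmx (rsubmx x))).
Definition pr2 (x : W) : V L2 :=
  row_mx (rsubmx (lsubmx x)) (rsubmx (lsubmx (rsubmx x))).
Definition pr3 (x : W) : 'rV[K]_(n1 * n2) := rsubmx (rsubmx x).
Definition emb (a1 : V L1) (a2 : V L2) (z : 'rV[K]_(n1 * n2)) : W :=
  row_mx (row_mx (lsubmx a1) (lsubmx a2))
         (row_mx (row_mx (rsubmx a1) (rsubmx a2)) z).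

Definition prod_br (x y : W) : W :=
  emb (lbr (pr1 x) (pr1 y)) (lbr (pr2 x) (pr2 y))
      (mxvec (\matrix_(i < n1, j < n2)
          ((lsubmx (pr1 x)) 0 i * (lsubmx (pr2 y)) 0 j
           - (lsubmx (pr1 y)) 0 i * (lsubmx (pr2 x)) 0 j))).

Definition prodg : lieb K := @Lieb K (n1 + n2) (r1 + r2 + n1 * n2) prod_br.

End Product.

Definition iter_prodg (L : lieb K) (Ls : seq (lieb K)) : lieb K :=
  foldl prodg L Ls.

Definition std_lie L : Prop :=
  [/\ is_lie L, adapted L, nilpotent L & nonabelian L].

Definition S_algebra (L1 : lieb K) : Prop :=
  forall L2 : lieb K, std_lie L2 ->
  forall D : 'M[K]_(lg (prodg L1 L2) + lr (prodg L1 L2)),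
    is_der D ->
    forall a : V L1, inC1 (pr2 (emb a 0 0 *m D)).

End LieDefs.

(* Main.v *)
Require Import Defs.
From HB Require Import structures.
From mathcomp Require Import all_boot all_order all_algebra.
From mathcomp Require Import complex.
From mathcomp Require Import reals.
From mathcomp Require Import zify.
Set Implicit Arguments. Unset Strict Implicit. Unset Printing Implicit Defensive.
Import Order.TTheory GRing.Theory Num.Theory.
Local Open Scope ring_scope.


Section Gen.
Variable K : fieldType.

Definition lin (m n : nat) (f : 'rV[K]_m -> 'rV[K]_n) :=
  forall (a : K) x y, f (a *: x + y) = a *: f x + f y.

Lemma lin0 m n (f : 'rV[K]_m -> 'rV[K]_n) : lin f -> f 0 = 0.
Proof.
move=> H; have h := H 1 0 0; rewrite !scale1r addr0 in h.
have := congr1 (fun v => v - f 0) h; rewrite /= subrr addrK => <-. by [].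
Qed.

Lemma linD m n (f : 'rV[K]_m -> 'rV[K]_n) : lin f -> forall x y, f (x + y) = f x + f y.
Proof. by move=> H x y; have := H 1 x y; rewrite !scale1r. Qed.

Lemma linZ m n (f : 'rV[K]_m -> 'rV[K]_n) : lin f -> forall a x, f (a *: x) = a *: f x.
Proof. by move=> H a x; rewrite -[a *: x]addr0 H (lin0 H) addr0. Qed.

Lemma linN m n (f : 'rV[K]_m -> 'rV[K]_n) : lin f -> forall x, f (- x) = - f x.
Proof. by move=> H x; rewrite -scaleN1r linZ // scaleN1r. Qed.

Lemma linB m n (f : 'rV[K]_m -> 'rV[K]_n) : lin f -> forall x y, f (x - y) = f x - f y.
Proof. by move=> H x y; rewrite linD // linN. Qed.

Lemma lin_sum m n (f : 'rV[K]_m -> 'rV[K]_n) I (r : seq I) (P : pred I) F :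
  lin f -> f (\sum_(i <- r | P i) F i) = \sum_(i <- r | P i) f (F i).
Proof.
move=> H; elim/big_rec2: _ => [|i y1 y2 _ <-]; first exact: lin0.
by rewrite linD.
Qed.

Lemma lin_comp m n p (f : 'rV[K]_m -> 'rV[K]_n) (g : 'rV[K]_n -> 'rV[K]_p) :
  lin f -> lin g -> lin (fun x => g (f x)).
Proof. by move=> Hf Hg a x y; rewrite Hf Hg. Qed.

Lemma lin_rmul m n (M : 'M[K]_(m, n)) : lin (fun x => x *m M).
Proof. by move=> a x y; rewrite mulmxDl scalemxAl. Qed.

Definition mx_of m n (f : 'rV[K]_m -> 'rV[K]_n) : 'M[K]_(m, n) := lin1_mx f.

Lemma mx_ofE m n (f : 'rV[K]_m -> 'rV[K]_n) : lin f -> forall u, u *m mx_of f = f u.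
Proof.
move=> H u; rewrite /mx_of mulmx_sum_row {2}[u]row_sum_delta lin_sum //.
apply: eq_bigr => i _; rewrite linZ //; congr (_ *: _).
by apply/rowP => j; rewrite !mxE.
Qed.

Implicit Types L : lieb K.
Local Notation V L := 'rV[K]_(lg L + lr L).

Section LieL.
Variable L : lieb K.
Hypothesis HL : is_lie L.
Local Notation br := (@lbr K L).
Implicit Types (u v x y z p q : V L).

Lemma brl_lin y : lin (fun x : V L => br x y).
Proof. by case: HL => h1 _ _ _ a x z; rewrite h1. Qed.
Lemma brr_lin x : lin (fun y : V L => br x y).
Proof. by case: HL => _ h2 _ _ a y z; rewrite h2. Qed.

Lemma br0l y : br 0 y = 0. Proof. exact: (lin0 (brl_lin y)). Qed.
Lemma br0r x : br x 0 = 0. Proof. exact: (lin0 (brr_lin x)). Qed.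
Lemma brDl x1 x2 y : br (x1 + x2) y = br x1 y + br x2 y.
Proof. exact: (linD (brl_lin y)). Qed.
Lemma brDr x y1 y2 : br x (y1 + y2) = br x y1 + br x y2.
Proof. exact: (linD (brr_lin x)). Qed.
Lemma brZl a x y : br (a *: x) y = a *: br x y.
Proof. exact: (linZ (brl_lin y)). Qed.
Lemma brZr a x y : br x (a *: y) = a *: br x y.
Proof. exact: (linZ (brr_lin x)). Qed.
Lemma brNl x y : br (- x) y = - br x y.
Proof. exact: (linN (brl_lin y)). Qed.
Lemma brNr x y : br x (- y) = - br x y.
Proof. exact: (linN (brr_lin x)). Qed.
Lemma brBr x y1 y2 : br x (y1 - y2) = br x y1 - br x y2.
Proof. exact: (linB (brr_lin x)). Qed.

Lemma br_anti x y : br y x = - br x y.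
Proof.
case: HL => _ _ h3 _; have := h3 (x + y).
rewrite brDl !brDr !h3 add0r addr0 => /eqP; rewrite addr_eq0 => /eqP ->.
by rewrite opprK.
Qed.

Lemma br_jac p q z : br (br p q) z = br p (br q z) - br q (br p z).
Proof.
case: HL => _ _ _ h4; have := h4 p q z.
rewrite [br z (br p q)]br_anti [br z p]br_anti brNr => /eqP.
by rewrite subr_eq0 => /eqP <-.
Qed.

Lemma inC1_0 : @inC1 K L 0.
Proof. by exists 0%N, (fun _ => 0), (fun _ => 0), (fun _ => 0); rewrite big_ord0. Qed.

Lemma inC1_br x y : inC1 (br x y).
Proof.
exists 1%N, (fun _ => 1), (fun _ => x), (fun _ => y).
by rewrite big_ord1 scale1r.
Qed.

Lemma inC1_Z a v : inC1 v -> inC1 (a *: v).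
Proof.
case=> k [b [xs [ys ->]]]; exists k, (fun i => a * b i), xs, ys.
by rewrite scaler_sumr; apply: eq_bigr => i _; rewrite scalerA.
Qed.

Lemma inC1_D u v : inC1 u -> inC1 v -> inC1 (u + v).
Proof.
case=> k1 [a1 [x1 [y1 ->]]]; case=> k2 [a2 [x2 [y2 ->]]].
exists (k1 + k2)%N,
  (fun i => match split i with inl j => a1 j | inr j => a2 j end),
  (fun i => match split i with inl j => x1 j | inr j => x2 j end),
  (fun i => match split i with inl j => y1 j | inr j => y2 j end).
rewrite big_split_ord /=; congr (_ + _); apply: eq_bigr => i _.
  by rewrite (unsplitK (inl i)).
by rewrite (unsplitK (inr i)).
Qed.

Lemma inC1_N v : inC1 v -> inC1 (- v).
Proof. by move=> h; rewrite -scaleN1r; apply: inC1_Z. Qed.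

Lemma inC1_B u v : inC1 u -> inC1 v -> inC1 (u - v).
Proof. by move=> hu hv; apply: inC1_D => //; apply: inC1_N. Qed.

Lemma inC1_sum I (r : seq I) (P : pred I) (F : I -> V L) :
  (forall i, P i -> inC1 (F i)) -> inC1 (\sum_(i <- r | P i) F i).
Proof.
move=> H; elim/big_rec: _ => [|i x Pi hx]; first exact: inC1_0.
by apply: inC1_D => //; apply: H.
Qed.

Lemma der_inC1 D v : is_der D -> inC1 v -> inC1 (v *m D).
Proof.
move=> hD [k [a [xs [ys ->]]]]; rewrite mulmx_suml; apply: inC1_sum => i _.
rewrite -scalemxAl hD; apply: inC1_Z; apply: inC1_D; exact: inC1_br.
Qed.

Lemma adapted_br : adapted L -> forall x y, lsubmx (br x y) = 0.
Proof. by move=> hA x y; apply/hA/inC1_br. Qed.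

Local Notation Mx := 'M[K]_(lg L + lr L).

Fixpoint alld (w : seq Mx) : Prop :=
  if w is D :: w' then is_der D /\ alld w' else True.

Definition app v (w : seq Mx) : V L := foldl (fun x D => x *m D) v w.

Lemma alld_cat w1 w2 : alld (w1 ++ w2) <-> alld w1 /\ alld w2.
Proof. by elim: w1 => [|D w1 IH] /=; [tauto | rewrite IH; tauto]. Qed.

Lemma alld_rcons w D : alld w -> is_der D -> alld (rcons w D).
Proof. by move=> h1 h2; rewrite -cats1; apply/alld_cat; split => //=. Qed.

Lemma app_cat v w1 w2 : app v (w1 ++ w2) = app (app v w1) w2.
Proof. by rewrite /app foldl_cat. Qed.

Lemma app_lin w : lin (fun v => app v w).
Proof.
elim: w => [|D w IH] a x y //=.
by rewrite /app /= -/(app _ _) -/(app _ _) -/(app _ _) -IH mulmxDl scalemxAl.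
Qed.

Lemma app0 w : app 0 w = 0. Proof. exact: (lin0 (app_lin w)). Qed.

Lemma charseq_app k v : charseq k v ->
  exists u w, [/\ alld w, size w = k & v = app u w].
Proof.
elim: k v => [|k IH] v /=; first by move=> _; exists v, [::].
case=> D [Y [hD /IH [u [w [hw hs ->]]] ->]].
exists u, (rcons w D); split; first exact: alld_rcons.
  by rewrite size_rcons hs.
by rewrite /app foldl_rcons.
Qed.

Definition B (xs : seq (V L)) y := foldr br y xs.

Lemma B_lin_slot xs1 xs2 y : lin (fun x => B (xs1 ++ x :: xs2) y).
Proof.
elim: xs1 => [|z xs1 IH] /=; first exact: brl_lin.
exact: (lin_comp IH (brr_lin z)).
Qed.

Lemma B_lin_y xs : lin (fun y => B xs y).
Proof.
elim: xs => [|z xs IH] /=; first by move=> a x y.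
exact: (lin_comp IH (brr_lin z)).
Qed.

Lemma B_jac xs1 xs2 p q y :
  B (xs1 ++ br p q :: xs2) y = B (xs1 ++ p :: q :: xs2) y - B (xs1 ++ q :: p :: xs2) y.
Proof.
elim: xs1 => [|z xs1 IH] /=; first exact: br_jac.
by rewrite IH brBr.
Qed.

Lemma B_rcons xs p q : B (rcons xs p) q = B xs (br p q).
Proof. by rewrite /B foldr_rcons. Qed.

Lemma leibniz D xs y : is_der D ->
  B xs y *m D = \sum_(i < size xs) B (take i xs ++ (nth 0 xs i *m D) :: drop i.+1 xs) y
                + B xs (y *m D).
Proof.
move=> hD; elim: xs => [|x xs IH] /=; first by rewrite big_ord0 add0r.
rewrite hD IH big_ord_recl /= drop0 -!addrA; congr (_ + _).
rewrite brDr (lin_sum _ _ _ (brr_lin x)); congr (_ + _).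
Qed.

Section Claim.
Variables (N m : nat).
Hypothesis HN : forall xs y, size xs = N -> B xs y = 0.
Hypothesis Hm : forall w, alld w -> size w = m -> forall v, inC1 (app v w).
Hypothesis m_gt0 : (0 < m)%N.

Definition Kb n := ((N - n) * (N.+1 * m))%N.

Definition claim n := forall xs y w, size xs = n -> alld w -> (Kb n <= size w)%N ->
  app (B xs y) w = 0.

Definition Fl c x := exists u w, [/\ alld w, size w = c & x = app u w].

Lemma claimN : claim N.
Proof. by move=> xs y w hs _ _; rewrite HN // app0. Qed.

Lemma app_sum_zero I (r : seq I) (P : pred I) (F : I -> V L) w :
  (forall i, P i -> app (F i) w = 0) -> app (\sum_(i <- r | P i) F i) w = 0.
Proof.
move=> H; rewrite (lin_sum _ _ _ (app_lin w)); exact: big1.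
Qed.

Lemma slotC1 n : claim n.+1 -> forall xs1 x xs2 y w,
  (size xs1 + size xs2).+1 = n -> inC1 x -> alld w -> (Kb n.+1 <= size w)%N ->
  app (B (xs1 ++ x :: xs2) y) w = 0.
Proof.
move=> IH xs1 x xs2 y w hs [k [a [ps [qs ->]]]] hw hK.
rewrite (lin_sum _ _ _ (B_lin_slot xs1 xs2 y)); apply: app_sum_zero => i _.
rewrite (linZ (B_lin_slot xs1 xs2 y)) (linZ (app_lin w)) B_jac (linB (app_lin w)).
by rewrite !(IH _ _ w) ?subrr ?scaler0 // size_cat /= -hs !addnS.
Qed.

Lemma yC1 n : claim n.+1 -> forall xs y w,
  size xs = n -> inC1 y -> alld w -> (Kb n.+1 <= size w)%N ->
  app (B xs y) w = 0.
Proof.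
move=> IH xs y w hs [k [a [ps [qs ->]]]] hw hK.
rewrite (lin_sum _ _ _ (B_lin_y xs)); apply: app_sum_zero => i _.
rewrite (linZ (B_lin_y xs)) (linZ (app_lin w)) -B_rcons (IH _ _ w) ?scaler0 //.
by rewrite size_rcons hs.
Qed.

Lemma slots n : claim n.+1 -> forall w ps y cy, size ps = n ->
  (forall s, s \in ps -> (s.2 < m)%N /\ Fl s.2 s.1) -> (cy < m)%N -> Fl cy y ->
  alld w -> (sumn [seq (m - s.2)%N | s <- ps] + (m - cy) + Kb n.+1 <= size w)%N ->
  app (B (map fst ps) y) w = 0.
Proof.
move=> IH; elim=> [|D w IHw] ps y cy hs hps hcy hFy hw hpot.
  by move: hpot => /=; lia.
case: hw => hD hw.
rewrite /app /= -/(app _ w) leibniz // (linD (app_lin w)).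
apply: (@eq_trans _ _ (0 + 0)); last by rewrite addr0.
congr (_ + _).
  apply: app_sum_zero => i _.
  have hi : (i < size ps)%N by rewrite -(size_map fst); exact: ltn_ord.
  case Es : (nth (0, 0%N) ps i) => [x c].
  have ps_split : ps = take i ps ++ (x, c) :: drop i.+1 ps by rewrite -Es -drop_nth // cat_take_drop.
  have hs_in : (x, c) \in ps by rewrite -Es; exact: mem_nth.
  have [/= hlt [u [w0 [hw0 hsz hsx]]]] := hps _ hs_in.
  have hsum : sumn [seq (m - t.2)%N | t <- ps] =
     (sumn [seq (m - t.2)%N | t <- take i ps] + (m - c) + sumn [seq (m - t.2)%N | t <- drop i.+1 ps])%N.
    by rewrite {1}ps_split map_cat sumn_cat /= addnA.
  have hst : size (take i ps) = i by rewrite size_take hi.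
  have hsd : size (drop i.+1 ps) = (size ps - i.+1)%N by rewrite size_drop.
  rewrite (nth_map (0, 0%N)) // Es /= -map_take -map_drop.
  have hFD : Fl c.+1 (x *m D).
    exists u, (rcons w0 D); split; first exact: alld_rcons.
      by rewrite size_rcons hsz.
    by rewrite hsx /app foldl_rcons.
  case: (ltnP c.+1 m) => hc.
    have E : map fst (take i ps ++ (x *m D, c.+1) :: drop i.+1 ps) =
      map fst (take i ps) ++ x *m D :: map fst (drop i.+1 ps) by rewrite map_cat.
    rewrite -E; apply: (IHw _ y cy) => //.
    - by rewrite size_cat /= hst hsd; lia.
    - move=> s'; rewrite mem_cat inE => /orP [h|/orP [/eqP -> //|h]].
        by apply: hps; exact: mem_take h.
      by apply: hps; exact: mem_drop h.
    - rewrite map_cat sumn_cat /=; move: hpot; rewrite hsum /=.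
      move: (sumn _) (sumn _) (Kb _) => a1 a2 a3; lia.
  have hsm : c.+1 = m by lia.
  apply: (slotC1 IH) => //.
  - by rewrite size_map [size (map _ (drop _ _))]size_map hst hsd; lia.

  - by case: hFD => u' [w' [hw' hs' ->]]; apply: Hm => //; rewrite hs'.
  - by move: hpot; rewrite hsum /=; lia.
case: (ltnP cy.+1 m) => hc.
  apply: (IHw ps (y *m D) cy.+1) => //.
    case: hFy => u [w0 [hw0 hsz ->]]; exists u, (rcons w0 D); split.
    - exact: alld_rcons.
    - by rewrite size_rcons hsz.
    - by rewrite /app foldl_rcons.
  by move: hpot => /=; lia.
apply: (yC1 IH) => //.
- by rewrite size_map.
- case: hFy => u [w0 [hw0 hsz ->]]; rewrite /app -foldl_rcons -/(app _ _).
  by apply: Hm; [exact: alld_rcons | rewrite size_rcons hsz; lia].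
- by move: hpot => /=; lia.
Qed.

Lemma claim_step n : (n < N)%N -> claim n.+1 -> claim n.
Proof.
move=> hn IH xs y w hs hw hK.
have hmap : map fst (map (fun x => (x, 0%N)) xs) = xs by elim: (xs) => //= x xs' ->.
have := @slots n IH w (map (fun x => (x, 0%N)) xs) y 0%N.
rewrite hmap; apply => //.
- by rewrite size_map.
- move=> s /mapP [x _ ->] /=; split => //; by exists x, [::]; split => //=.
- by exists y, [::]; split => //=.
- have -> : sumn [seq (m - s.2)%N | s <- map (fun x => (x, 0%N)) xs] = (size xs * m)%N.
    by elim: (xs) => //= x xs' ->; rewrite subn0 mulSn.
  rewrite subn0; move: hK; rewrite /Kb.
  have -> : (N - n = (N - n.+1).+1)%N by lia.
  rewrite mulSn hs => h2.
  have h1 : (n * m + m <= N.+1 * m)%N by nia.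
  move: h1 h2; move: (N.+1 * m)%N (n * m)%N ((N - n.+1) * (N.+1 * m))%N => a b c; lia.
Qed.

Lemma claim0 : claim 0.
Proof.
suff H : forall d, (d <= N)%N -> claim (N - d) by rewrite -(subnn N); apply: H.
elim=> [|d IH] hd; first by rewrite subn0; exact: claimN.
apply: claim_step; first by lia.
have -> : ((N - d.+1).+1 = N - d)%N by lia.
by apply: IH; lia.
Qed.

Lemma charnil_of : char_nilpotent L.
Proof.
exists (Kb 0) => v /charseq_app [u [w [hw hs ->]]].
have := @claim0 [::] u w erefl hw; rewrite hs; apply; exact: leqnn.
Qed.

End Claim.

End LieL.
End Gen.


Section Prod.
Variable K : fieldType.
Variables A B : lieb K.
Local Notation nA := (lg A). Local Notation rA := (lr A).
Local Notation nB := (lg B). Local Notation rB := (lr B).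
Local Notation VA := 'rV[K]_(lg A + lr A).
Local Notation VB := 'rV[K]_(lg B + lr B).
Local Notation W := 'rV[K]_((nA + nB) + (rA + rB + nA * nB)).
Local Notation Z := 'rV[K]_(nA * nB).
Implicit Types (x y : W) (a : VA) (b : VB) (z : Z).

Lemma pr1_emb a b z : pr1 (emb a b z) = a.
Proof. by rewrite /pr1 /emb !(row_mxKl, row_mxKr) hsubmxK. Qed.
Lemma pr2_emb a b z : pr2 (emb a b z) = b.
Proof. by rewrite /pr2 /emb !(row_mxKl, row_mxKr) hsubmxK. Qed.
Lemma pr3_emb a b z : pr3 (emb a b z) = z.
Proof. by rewrite /pr3 /emb !row_mxKr. Qed.
Lemma emb_pr x : emb (pr1 x) (pr2 x) (pr3 x) = x.
Proof.
by rewrite /emb /pr1 /pr2 /pr3 !(row_mxKl, row_mxKr) !hsubmxK.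
Qed.

Lemma W_ext x y : pr1 x = pr1 y -> pr2 x = pr2 y -> pr3 x = pr3 y -> x = y.
Proof. by move=> h1 h2 h3; rewrite -(emb_pr x) -(emb_pr y) h1 h2 h3. Qed.

Lemma pr1_lin : lin (@pr1 K A B).
Proof. by move=> c x y; rewrite /pr1 !linearD !linearZ /= scale_row_mx add_row_mx. Qed.
Lemma pr2_lin : lin (@pr2 K A B).
Proof. by move=> c x y; rewrite /pr2 !linearD !linearZ /= scale_row_mx add_row_mx. Qed.
Lemma pr3_lin : lin (@pr3 K A B).
Proof. by move=> c x y; rewrite /pr3 !linearD !linearZ. Qed.

Lemma emb_lin c a1 b1 z1 a2 b2 z2 :
  emb (c *: a1 + a2) (c *: b1 + b2) (c *: z1 + z2) = c *: emb a1 b1 z1 + emb a2 b2 z2.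
Proof.
apply: W_ext; rewrite ?(linD pr1_lin) ?(linD pr2_lin) ?(linD pr3_lin).
all: by rewrite ?(linZ pr1_lin) ?(linZ pr2_lin) ?(linZ pr3_lin) !(pr1_emb, pr2_emb, pr3_emb).
Qed.

Lemma emb0 : emb 0 0 0 = 0 :> W.
Proof. by apply: W_ext; rewrite ?pr1_emb ?pr2_emb ?pr3_emb ?(lin0 pr1_lin) ?(lin0 pr2_lin) ?(lin0 pr3_lin). Qed.

Lemma lsub_emb a b z : lsubmx (emb a b z) = row_mx (lsubmx a) (lsubmx b).
Proof. by rewrite /emb row_mxKl. Qed.

Lemma lsub_pr x : lsubmx x = row_mx (lsubmx (pr1 x)) (lsubmx (pr2 x)).
Proof. by rewrite -{1}(emb_pr x) lsub_emb. Qed.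

Definition Zx x y : 'M[K]_(nA, nB) :=
  (lsubmx (pr1 x))^T *m lsubmx (pr2 y) - (lsubmx (pr1 y))^T *m lsubmx (pr2 x).

Lemma outerE (u u' : 'rV[K]_nA) (v v' : 'rV[K]_nB) :
  \matrix_(i < nA, j < nB) (u 0 i * v 0 j - u' 0 i * v' 0 j) = u^T *m v - u'^T *m v'.
Proof.
apply/matrixP => i j; rewrite !mxE !big_ord1 !mxE.
by congr (_ * _ - _ * _); congr (_ _ _); apply: val_inj; case: (_ : 'I_1) => -[].
Qed.

Lemma prod_brE x y : prod_br x y =
  emb (lbr (pr1 x) (pr1 y)) (lbr (pr2 x) (pr2 y)) (mxvec (Zx x y)).
Proof. by rewrite /prod_br outerE. Qed.

Lemma pr1_br x y : pr1 (prod_br x y) = lbr (pr1 x) (pr1 y).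
Proof. by rewrite prod_brE pr1_emb. Qed.
Lemma pr2_br x y : pr2 (prod_br x y) = lbr (pr2 x) (pr2 y).
Proof. by rewrite prod_brE pr2_emb. Qed.
Lemma pr3_br x y : pr3 (prod_br x y) = mxvec (Zx x y).
Proof. by rewrite prod_brE pr3_emb. Qed.

Lemma Zx_linl c x y (w : W) : Zx (c *: x + y) w = c *: Zx x w + Zx y w.
Proof.
rewrite /Zx !(linD pr1_lin) !(linZ pr1_lin) !(linD pr2_lin) !(linZ pr2_lin).
by rewrite !linearD !linearZ /= mulmxDl -scalemxAl addrACA.
Qed.

Lemma Zx_linr c x y (w : W) : Zx w (c *: x + y) = c *: Zx w x + Zx w y.
Proof.
rewrite /Zx !(linD pr1_lin) !(linZ pr1_lin) !(linD pr2_lin) !(linZ pr2_lin).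
by rewrite !linearD !linearZ /= mulmxDl -scalemxAl opprD addrACA scalerN.
Qed.

Lemma Zx_xx x : Zx x x = 0.
Proof. by rewrite /Zx subrr. Qed.

Lemma Zx_0l x y : lsubmx (pr1 x) = 0 -> lsubmx (pr2 x) = 0 -> Zx x y = 0.
Proof. by move=> h1 h2; rewrite /Zx h1 h2 trmx0 mul0mx mulmx0 subrr. Qed.
Lemma Zx_0r x y : lsubmx (pr1 y) = 0 -> lsubmx (pr2 y) = 0 -> Zx x y = 0.
Proof. by move=> h1 h2; rewrite /Zx h1 h2 trmx0 mul0mx mulmx0 subrr. Qed.

Section Std.
Hypothesis HA : std_lie A.
Hypothesis HB : std_lie B.

Let LA : is_lie A. Proof. by case: HA. Qed.
Let LB : is_lie B. Proof. by case: HB. Qed.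
Let AA : adapted A. Proof. by case: HA. Qed.
Let AB : adapted B. Proof. by case: HB. Qed.

Lemma lsub_br_pr1 x y : lsubmx (pr1 (prod_br x y)) = 0.
Proof. by rewrite pr1_br (adapted_br AA). Qed.
Lemma lsub_br_pr2 x y : lsubmx (pr2 (prod_br x y)) = 0.
Proof. by rewrite pr2_br (adapted_br AB). Qed.

Lemma prod_is_lie : is_lie (prodg A B).
Proof.
split => /=.
- move=> c x y w; apply: W_ext.
  + rewrite (linD pr1_lin) (linZ pr1_lin) !pr1_br (linD pr1_lin) (linZ pr1_lin).
    by rewrite (brl_lin LA).
  + rewrite (linD pr2_lin) (linZ pr2_lin) !pr2_br (linD pr2_lin) (linZ pr2_lin).
    by rewrite (brl_lin LB).
  + by rewrite (linD pr3_lin) (linZ pr3_lin) !pr3_br Zx_linl linearD linearZ.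
- move=> c x y w; apply: W_ext.
  + rewrite (linD pr1_lin) (linZ pr1_lin) !pr1_br (linD pr1_lin) (linZ pr1_lin).
    by rewrite (brr_lin LA).
  + rewrite (linD pr2_lin) (linZ pr2_lin) !pr2_br (linD pr2_lin) (linZ pr2_lin).
    by rewrite (brr_lin LB).
  + by rewrite (linD pr3_lin) (linZ pr3_lin) !pr3_br Zx_linr linearD linearZ.
- move=> x; rewrite prod_brE Zx_xx linear0.
  by case: LA => _ _ -> _; case: LB => _ _ -> _; rewrite emb0.
- move=> x y w; apply: W_ext.
  + rewrite !(linD pr1_lin) !pr1_br (lin0 pr1_lin).
    by case: LA => _ _ _ ->.
  + rewrite !(linD pr2_lin) !pr2_br (lin0 pr2_lin).
    by case: LB => _ _ _ ->.
  + rewrite !(linD pr3_lin) !pr3_br (lin0 pr3_lin).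
    by rewrite !Zx_0r ?lsub_br_pr1 ?lsub_br_pr2 // linear0 !addr0.
Qed.

Lemma emb_lin1 : lin (fun a : VA => emb a 0 (0 : Z)).
Proof. by move=> c a1 a2; rewrite -emb_lin scaler0 addr0 scaler0 addr0. Qed.
Lemma emb_lin2 : lin (fun b : VB => emb 0 b (0 : Z)).
Proof. by move=> c a1 a2; rewrite -emb_lin scaler0 addr0 scaler0 addr0. Qed.
Lemma emb_lin3 : lin (fun z : Z => emb (0 : VA) (0 : VB) z).
Proof. by move=> c a1 a2; rewrite -emb_lin scaler0 addr0 scaler0 addr0. Qed.

Lemma emb_split a b z : emb a b z = emb a 0 0 + emb 0 b 0 + emb 0 0 z.
Proof.
by apply: W_ext; rewrite !(linD pr1_lin, linD pr2_lin, linD pr3_lin) !(pr1_emb, pr2_emb, pr3_emb) ?addr0 ?add0r.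
Qed.

Lemma br_emb1 p q : prod_br (emb p 0 0) (emb q 0 0) = emb (lbr p q) 0 (0 : Z).
Proof.
rewrite prod_brE !pr1_emb !pr2_emb (br0l LB) /Zx !pr1_emb !pr2_emb.
by rewrite linear0 !mulmx0 subrr linear0.
Qed.

Lemma br_emb2 p q : prod_br (emb 0 p 0) (emb 0 q 0) = emb 0 (lbr p q) (0 : Z).
Proof.
rewrite prod_brE !pr1_emb !pr2_emb (br0l LA) /Zx !pr1_emb !pr2_emb.
by rewrite linear0 trmx0 !mul0mx subrr linear0.
Qed.

Definition genA (i : 'I_nA) : VA := row_mx (delta_mx 0 i) 0.
Definition genB (j : 'I_nB) : VB := row_mx (delta_mx 0 j) 0.

Lemma br_gen i j : prod_br (emb (genA i) 0 0) (emb 0 (genB j) 0) =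
  emb 0 0 (mxvec (delta_mx i j)).
Proof.
rewrite prod_brE !pr1_emb !pr2_emb (br0r LA) (br0l LB); congr emb.
rewrite /Zx !pr1_emb !pr2_emb /genA /genB !row_mxKl linear0 trmx0 mul0mx subr0.
by rewrite trmx_delta mul_delta_mx.
Qed.

Lemma prod_adapted : adapted (prodg A B).
Proof.
move=> v; split.
  case=> k [c [xs [ys ->]]] /=; rewrite linear_sum big1 // => i _.
  by rewrite linearZ /= prod_brE lsub_emb !(adapted_br AA, adapted_br AB) row_mx0 scaler0.
move=> /= hv; have : row_mx (lsubmx (pr1 v)) (lsubmx (pr2 v)) = 0 by rewrite -lsub_pr.
rewrite -row_mx0 => /eq_row_mx [h1 h2].
rewrite -(emb_pr v) emb_split.
have hL : is_lie (prodg A B) by exact: prod_is_lie.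
apply: inC1_D; first apply: inC1_D.
- have /AA [k [c [xs [ys ->]]]] := h1.
  rewrite (lin_sum _ _ _ emb_lin1); apply: inC1_sum => i _.
  by rewrite (linZ emb_lin1) -br_emb1; apply: inC1_Z; apply: inC1_br.
- have /AB [k [c [xs [ys ->]]]] := h2.
  rewrite (lin_sum _ _ _ emb_lin2); apply: inC1_sum => i _.
  by rewrite (linZ emb_lin2) -br_emb2; apply: inC1_Z; apply: inC1_br.
- rewrite -[pr3 v]vec_mxK [vec_mx _]matrix_sum_delta.
  rewrite linear_sum (lin_sum _ _ _ emb_lin3); apply: inC1_sum => i _.
  rewrite linear_sum (lin_sum _ _ _ emb_lin3); apply: inC1_sum => j _.
  rewrite linearZ (linZ emb_lin3) -br_gen; apply: inC1_Z; exact: inC1_br.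
Qed.

Lemma foldr_pr1 xs y :
  pr1 (foldr (@prod_br K A B) y xs) = foldr (@lbr K A) (pr1 y) (map (@pr1 K A B) xs).
Proof. by elim: xs => //= x xs <-; rewrite pr1_br. Qed.
Lemma foldr_pr2 xs y :
  pr2 (foldr (@prod_br K A B) y xs) = foldr (@lbr K B) (pr2 y) (map (@pr2 K A B) xs).
Proof. by elim: xs => //= x xs <-; rewrite pr2_br. Qed.

End Std.

Lemma nil_ge (L : lieb K) (N : nat) : is_lie L ->
  (forall (xs : seq 'rV[K]_(lg L + lr L)) (y : 'rV[K]_(lg L + lr L)), size xs = N -> foldr (@lbr K L) y xs = 0) ->
  forall (xs : seq 'rV[K]_(lg L + lr L)) (y : 'rV[K]_(lg L + lr L)), (N <= size xs)%N -> foldr (@lbr K L) y xs = 0.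
Proof.
move=> HL HN xs y hs.
have hd : size (drop (size xs - N) xs) = N by rewrite size_drop; lia.
rewrite -(cat_take_drop (size xs - N) xs) foldr_cat (HN _ _ hd).
by elim: (take _ _) => //= x s ->; rewrite (br0r HL).
Qed.

Lemma prod_std : std_lie A -> std_lie B -> std_lie (prodg A B).
Proof.
move=> HA HB; split.
- exact: prod_is_lie.
- exact: prod_adapted.
- case: (HA) => LA _ [NA hNA] _; case: (HB) => LB _ [NB hNB] _.
  exists (maxn NA NB).+1 => -[|x xs] y //= [hs].
  have h1 : pr1 (foldr (@prod_br K A B) y xs) = 0.
    by rewrite foldr_pr1 (nil_ge LA hNA) // size_map hs leq_maxl.
  have h2 : pr2 (foldr (@prod_br K A B) y xs) = 0.
    by rewrite foldr_pr2 (nil_ge LB hNB) // size_map hs leq_maxr.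
  rewrite prod_brE h1 h2 (br0r LA) (br0r LB) Zx_0r ?emb0 ?h1 ?h2 ?linear0 //; exact: emb0.
- case: (HA) => LA _ _ [p [q hpq]].
  exists (emb p 0 0), (emb q 0 0) => /=.
  apply/eqP => h; move/eqP: hpq; apply.
  by have := congr1 (@pr1 K A B) h; rewrite prod_brE !pr1_emb (lin0 pr1_lin).
Qed.

End Prod.


Arguments pr1_lin {K A B}.
Arguments pr2_lin {K A B}.
Arguments pr3_lin {K A B}.
Arguments emb0 {K A B}.
Arguments emb_lin1 {K A B}.
Arguments emb_lin2 {K A B}.
Arguments emb_lin3 {K A B}.

Section Iso.
Variable K : fieldType.
Local Notation V L := 'rV[K]_(lg L + lr L).

Definition iso (L L' : lieb K) (f : V L -> V L') (g : V L' -> V L) :=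
  [/\ lin g, cancel f g, cancel g f &
      forall x y, f (lbr x y) = lbr (f x) (f y)].

Lemma iso_linf L L' f g : @iso L L' f g -> lin f.
Proof.
case=> hg fK gK _ c x y.
by rewrite -[x]fK -[y]fK -hg gK !fK.
Qed.

Lemma der_transport L L' f g (D : 'M[K]_(lg L' + lr L')) : @iso L L' f g -> is_der D ->
  is_der (mx_of (fun x => g (f x *m D))).
Proof.
move=> hi hD; have hf := iso_linf hi; case: hi => hg fK gK hb.
have hl : lin (fun x => g (f x *m D)).
  exact: (lin_comp (lin_comp hf (lin_rmul D)) hg).
move=> x y; rewrite !(mx_ofE hl) hb hD (linD hg).
have e1 u v : lbr (g u) v = g (lbr u (f v)) by rewrite -[lbr (g u) v]fK hb gK.
have e2 u v : lbr v (g u) = g (lbr (f v) u) by rewrite -[lbr v (g u)]fK hb gK.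
by rewrite e1 e2.
Qed.

Lemma S_transport (A B G : lieb K) f g (D : 'M[K]_(lg G + lr G)) :
  S_algebra A -> std_lie B -> @iso (prodg A B) G f g -> is_der D ->
  forall a, inC1 (pr2 (g (f (emb a 0 0) *m D))).
Proof.
move=> hS hB hi hD a.
have hf := iso_linf hi; have [hg _ _ _] := hi.
have hl : lin (fun x => g (f x *m D)).
  exact: (lin_comp (lin_comp hf (lin_rmul D)) hg).
by have := hS B hB _ (der_transport hi hD) a; rewrite (mx_ofE hl).
Qed.

Lemma inC1_pr2 (A B : lieb K) (q : V (prodg A B)) : inC1 q -> inC1 (pr2 q).
Proof.
case=> k [c [xs [ys ->]]]; exists k, c, (fun i => pr2 (xs i)), (fun i => pr2 (ys i)).
rewrite (lin_sum _ _ _ pr2_lin); apply: eq_bigr => i _.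
by rewrite (linZ pr2_lin) /= pr2_br.
Qed.

Lemma inC1_pr1 (A B : lieb K) (q : V (prodg A B)) : inC1 q -> inC1 (pr1 q).
Proof.
case=> k [c [xs [ys ->]]]; exists k, c, (fun i => pr1 (xs i)), (fun i => pr1 (ys i)).
rewrite (lin_sum _ _ _ pr1_lin); apply: eq_bigr => i _.
by rewrite (linZ pr1_lin) /= pr1_br.
Qed.

Definition fsw (A B : lieb K) (x : V (prodg A B)) : V (prodg B A) :=
  emb (pr2 x) (pr1 x) (mxvec (- (vec_mx (pr3 x))^T)).

Lemma fsw_lin A B : lin (@fsw A B).
Proof.
move=> c x y; rewrite /fsw (linD pr1_lin) (linZ pr1_lin) (linD pr2_lin) (linZ pr2_lin).
rewrite (linD pr3_lin) (linZ pr3_lin) -emb_lin; congr emb.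
by rewrite !linearD !linearZ /=.
Qed.

Lemma fswK A B : cancel (@fsw A B) (@fsw B A).
Proof.
move=> x; rewrite /fsw pr1_emb pr2_emb pr3_emb mxvecK.
by rewrite !linearN /= trmxK opprK vec_mxK emb_pr.
Qed.

Lemma fsw_br A B x y : @fsw A B (prod_br x y) = prod_br (fsw x) (fsw y).
Proof.
apply: W_ext; rewrite /fsw !(pr1_br, pr2_br, pr3_br, pr1_emb, pr2_emb, pr3_emb) //.
congr mxvec; rewrite mxvecK /Zx !(pr1_emb, pr2_emb) linearB /= !trmx_mul !trmxK.
by rewrite opprB.
Qed.

Lemma iso_sw A B : @iso (prodg A B) (prodg B A) (@fsw A B) (@fsw B A).
Proof. split; [exact: fsw_lin | exact: fswK | exact: (@fswK B A) | exact: fsw_br]. Qed.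

Definition fas (A B C : lieb K) (x : V (prodg A (prodg B C))) : V (prodg (prodg A B) C) :=
  @emb K (prodg A B) C
    (@emb K A B (@pr1 K A (prodg B C) x) (@pr1 K B C (@pr2 K A (prodg B C) x))
        (mxvec (lsubmx (vec_mx (@pr3 K A (prodg B C) x) : 'M[K]_(lg A, lg B + lg C)))))
    (@pr2 K B C (@pr2 K A (prodg B C) x))
    (mxvec (col_mx (rsubmx (vec_mx (@pr3 K A (prodg B C) x) : 'M[K]_(lg A, lg B + lg C)))
                   (vec_mx (@pr3 K B C (@pr2 K A (prodg B C) x))))).

Definition gas (A B C : lieb K) (y : V (prodg (prodg A B) C)) : V (prodg A (prodg B C)) :=
  @emb K A (prodg B C) (@pr1 K A B (@pr1 K (prodg A B) C y))
    (@emb K B C (@pr2 K A B (@pr1 K (prodg A B) C y)) (@pr2 K (prodg A B) C y)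
       (mxvec (dsubmx (vec_mx (@pr3 K (prodg A B) C y) : 'M[K]_(lg A + lg B, lg C)))))
    (mxvec (row_mx (vec_mx (@pr3 K A B (@pr1 K (prodg A B) C y)))
                   (usubmx (vec_mx (@pr3 K (prodg A B) C y) : 'M[K]_(lg A + lg B, lg C))))).

Lemma fasK A B C : cancel (@fas A B C) (@gas A B C).
Proof.
move=> x; rewrite /fas /gas !(pr1_emb, pr2_emb, pr3_emb, mxvecK).
by rewrite col_mxKd col_mxKu hsubmxK !vec_mxK !emb_pr.
Qed.

Lemma gasK A B C : cancel (@gas A B C) (@fas A B C).
Proof.
move=> y; rewrite /fas /gas !(pr1_emb, pr2_emb, pr3_emb, mxvecK).
by rewrite row_mxKl row_mxKr vsubmxK !vec_mxK !emb_pr.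
Qed.

Lemma gas_lin A B C : lin (@gas A B C).
Proof.
move=> c y1 y2; rewrite /gas.
rewrite !(linD pr1_lin, linZ pr1_lin, linD pr2_lin, linZ pr2_lin, linD pr3_lin, linZ pr3_lin).
rewrite !linearD !linearZ /= -add_row_mx -scale_row_mx !linearD !linearZ /=.
by rewrite !emb_lin.
Qed.

Lemma fas_br A B C x y : @fas A B C (prod_br x y) = prod_br (fas x) (fas y).
Proof.
apply: W_ext; rewrite /fas !(pr1_br, pr2_br, pr3_br, pr1_emb, pr2_emb, pr3_emb, mxvecK) /=.
- rewrite prod_brE !(pr1_br, pr2_br, pr3_br, pr1_emb, pr2_emb, pr3_emb, mxvecK) /=.
  congr (emb _ _ (mxvec _)); rewrite /Zx !(pr1_emb, pr2_emb).
  rewrite [lsubmx (pr2 y)]lsub_pr [lsubmx (pr2 x)]lsub_pr linearB /= !mul_mx_row.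
  by rewrite !row_mxKl.
- by [].
- congr mxvec; rewrite /Zx !(pr1_emb, pr2_emb) !lsub_emb !tr_row_mx !mul_col_mx.
  rewrite opp_col_mx add_col_mx; congr col_mx.
  rewrite [lsubmx (pr2 y)]lsub_pr [lsubmx (pr2 x)]lsub_pr linearB /= !mul_mx_row.
  by rewrite !row_mxKr.
Qed.

Lemma iso_as A B C : @iso (prodg A (prodg B C)) (prodg (prodg A B) C) (@fas A B C) (@gas A B C).
Proof. split; [exact: gas_lin | exact: fasK | exact: gasK | exact: fas_br]. Qed.

Definition fc (A B C : lieb K) (x : V (prodg B (prodg A C))) : V (prodg (prodg A B) C) :=
  @emb K (prodg A B) C
    (@emb K A B (@pr1 K A C (@pr2 K B (prodg A C) x)) (@pr1 K B (prodg A C) x)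
       (mxvec (- (lsubmx (vec_mx (@pr3 K B (prodg A C) x) : 'M[K]_(lg B, lg A + lg C)))^T)))
    (@pr2 K A C (@pr2 K B (prodg A C) x))
    (mxvec (col_mx (vec_mx (@pr3 K A C (@pr2 K B (prodg A C) x)))
                   (rsubmx (vec_mx (@pr3 K B (prodg A C) x) : 'M[K]_(lg B, lg A + lg C))))).

Definition gc (A B C : lieb K) (y : V (prodg (prodg A B) C)) : V (prodg B (prodg A C)) :=
  @emb K B (prodg A C) (@pr2 K A B (@pr1 K (prodg A B) C y))
    (@emb K A C (@pr1 K A B (@pr1 K (prodg A B) C y)) (@pr2 K (prodg A B) C y)
       (mxvec (usubmx (vec_mx (@pr3 K (prodg A B) C y) : 'M[K]_(lg A + lg B, lg C)))))
    (mxvec (row_mx (- (vec_mx (@pr3 K A B (@pr1 K (prodg A B) C y)))^T)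
                   (dsubmx (vec_mx (@pr3 K (prodg A B) C y) : 'M[K]_(lg A + lg B, lg C))))).

Lemma fcK A B C : cancel (@fc A B C) (@gc A B C).
Proof.
move=> x; rewrite /fc /gc !(pr1_emb, pr2_emb, pr3_emb, mxvecK).
by rewrite col_mxKd col_mxKu !linearN /= trmxK opprK hsubmxK !vec_mxK !emb_pr.
Qed.

Lemma gcK A B C : cancel (@gc A B C) (@fc A B C).
Proof.
move=> y; rewrite /fc /gc !(pr1_emb, pr2_emb, pr3_emb, mxvecK).
by rewrite row_mxKl row_mxKr !linearN /= trmxK opprK vsubmxK !vec_mxK !emb_pr.
Qed.

Lemma gc_lin A B C : lin (@gc A B C).
Proof.
move=> c y1 y2; rewrite /gc.
rewrite !(linD pr1_lin, linZ pr1_lin, linD pr2_lin, linZ pr2_lin, linD pr3_lin, linZ pr3_lin).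
rewrite !linearD !linearZ /= -add_row_mx -scale_row_mx !linearD !linearZ /=.
by rewrite !emb_lin.
Qed.

Lemma fc_br A B C x y : @fc A B C (prod_br x y) = prod_br (fc x) (fc y).
Proof.
apply: W_ext; rewrite /fc !(pr1_br, pr2_br, pr3_br, pr1_emb, pr2_emb, pr3_emb, mxvecK) /=.
- rewrite prod_brE !(pr1_br, pr2_br, pr3_br, pr1_emb, pr2_emb, pr3_emb, mxvecK) /=.
  congr (emb _ _ (mxvec _)); rewrite /Zx !(pr1_emb, pr2_emb).
  rewrite [lsubmx (pr2 y)]lsub_pr [lsubmx (pr2 x)]lsub_pr linearB /= !mul_mx_row.
  by rewrite !row_mxKl linearB /= !trmx_mul !trmxK opprB.
- by [].
- congr mxvec; rewrite /Zx !(pr1_emb, pr2_emb) !lsub_emb !tr_row_mx !mul_col_mx.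
  rewrite opp_col_mx add_col_mx; congr col_mx.
  rewrite [lsubmx (pr2 y)]lsub_pr [lsubmx (pr2 x)]lsub_pr linearB /= !mul_mx_row.
  by rewrite !row_mxKr.
Qed.

Lemma iso_c A B C : @iso (prodg B (prodg A C)) (prodg (prodg A B) C) (@fc A B C) (@gc A B C).
Proof. split; [exact: gc_lin | exact: fcK | exact: gcK | exact: fc_br]. Qed.

End Iso.


Arguments pr1_lin {K A B}.
Arguments pr2_lin {K A B}.
Arguments pr3_lin {K A B}.
Arguments emb0 {K A B}.
Arguments emb_lin1 {K A B}.
Arguments emb_lin2 {K A B}.
Arguments emb_lin3 {K A B}.

Section Main.
Variable K : fieldType.
Local Notation V L := 'rV[K]_(lg L + lr L).

Lemma Srev (H L : lieb K) : S_algebra L -> std_lie H ->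
  forall D : 'M[K]_(lg (prodg H L) + lr (prodg H L)), is_der D ->
  forall l : V L, inC1 (pr1 (emb 0 l 0 *m D)).
Proof.
move=> hS hH D hD l.
have := S_transport hS hH (iso_sw L H) hD l.
by rewrite /fsw !(pr1_emb, pr2_emb, pr3_emb) !linear0.
Qed.

Lemma emb3_C1 (H L : lieb K) (z : 'rV[K]_(lg H * lg L)) :
  std_lie H -> std_lie L -> @inC1 K (prodg H L) (emb (0 : V H) (0 : V L) z).
Proof.
move=> hH hL; apply/(prod_adapted hH hL).
by rewrite lsub_emb !linear0 row_mx0.
Qed.

Lemma S_prod (H L : lieb K) : std_lie H -> std_lie L -> S_algebra H -> S_algebra L ->
  S_algebra (prodg H L).
Proof.
move=> hH hL sH sL L2 hL2 D hD a.
rewrite -(emb_pr a) [emb (pr1 a) _ _]emb_split !(linD emb_lin1) !mulmxDl !(linD pr2_lin).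
apply: inC1_D; first apply: inC1_D.
- have := inC1_pr2 (S_transport sH (prod_std hL hL2) (iso_as H L L2) hD (pr1 a)).
  rewrite /gas !(pr1_emb, pr2_emb).
  congr (inC1 (pr2 (_ *m D))).
  rewrite /fas !(pr1_emb, pr2_emb, pr3_emb) !(lin0 pr1_lin, lin0 pr2_lin, lin0 pr3_lin).
  by rewrite !linear0 col_mx0 linear0.
- have := inC1_pr2 (S_transport sL (prod_std hH hL2) (iso_c H L L2) hD (pr2 a)).
  rewrite /gc !(pr1_emb, pr2_emb).
  congr (inC1 (pr2 (_ *m D))).
  rewrite /fc !(pr1_emb, pr2_emb, pr3_emb) !(lin0 pr1_lin, lin0 pr2_lin, lin0 pr3_lin).
  by rewrite !linear0 ?oppr0 ?linear0 ?col_mx0 ?linear0.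
- apply: inC1_pr2; apply: der_inC1 => //.
  apply/(prod_adapted (prod_std hH hL) hL2).
  by rewrite lsub_emb lsub_emb !linear0 !row_mx0.
Qed.

Lemma charseq_S (L : lieb K) k (v : V L) : charseq k.+1 v -> charseq k v.
Proof.
elim: k v => [|k IH] v //= [D [Y [hD hY ->]]].
by exists D, Y; split => //; apply: IH.
Qed.

Lemma charseq_le (L : lieb K) k j (v : V L) : (k <= j)%N -> charseq j v -> charseq k v.
Proof.
move=> hkj; rewrite -(subnKC hkj); elim: (j - k)%N v => [|d IH] v; first by rewrite addn0.
by rewrite addnS => /charseq_S /IH.
Qed.

Section Step.
Variables H L : lieb K.
Hypotheses (hH : std_lie H) (hL : std_lie L).
Hypotheses (sH : S_algebra H) (sL : S_algebra L).
Local Notation G := (prodg H L).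
Local Notation MG := 'M[K]_(lg G + lr G).

Let LH : is_lie H. Proof. by case: hH. Qed.
Let LL : is_lie L. Proof. by case: hL. Qed.
Let AH : adapted H. Proof. by case: hH. Qed.
Let AL : adapted L. Proof. by case: hL. Qed.
Let AG : adapted G. Proof. exact: (prod_adapted hH hL). Qed.

Definition DH (D : MG) := mx_of (fun h : V H => pr1 (emb h 0 0 *m D)).
Definition DL (D : MG) := mx_of (fun l : V L => pr2 (emb 0 l 0 *m D)).

Lemma DH_lin (D : MG) : lin (fun h : V H => pr1 (emb h 0 0 *m D)).
Proof. exact: (lin_comp (lin_comp emb_lin1 (lin_rmul D)) pr1_lin). Qed.
Lemma DL_lin (D : MG) : lin (fun l : V L => pr2 (emb 0 l 0 *m D)).
Proof. exact: (lin_comp (lin_comp emb_lin2 (lin_rmul D)) pr2_lin). Qed.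

Lemma DH_der (D : MG) : is_der D -> is_der (DH D).
Proof.
move=> hD x y; rewrite /DH !(mx_ofE (DH_lin D)) -(br_emb1 hL).
by rewrite hD (linD pr1_lin) !pr1_br !pr1_emb.
Qed.

Lemma DL_der (D : MG) : is_der D -> is_der (DL D).
Proof.
move=> hD x y; rewrite /DL !(mx_ofE (DL_lin D)) -(br_emb2 hH).
by rewrite hD (linD pr2_lin) !pr2_br !pr2_emb.
Qed.

Lemma key1 (D : MG) (v : V G) : is_der D ->
  lsubmx (pr1 (v *m D)) = lsubmx (pr1 v *m DH D).
Proof.
move=> hD; rewrite -{1}(emb_pr v) emb_split !mulmxDl !(linD pr1_lin) !linearD /=.
rewrite /DH (mx_ofE (DH_lin D)).
have -> : lsubmx (pr1 (emb 0 (pr2 v) 0 *m D)) = 0.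
  by apply/AH; apply: (Srev sL hH hD).
have -> : lsubmx (pr1 (emb 0 0 (pr3 v) *m D)) = 0.
  by apply/AH; apply: inC1_pr1; apply: der_inC1 => //; apply: emb3_C1.
by rewrite !addr0.
Qed.

Lemma key2 (D : MG) (v : V G) : is_der D ->
  lsubmx (pr2 (v *m D)) = lsubmx (pr2 v *m DL D).
Proof.
move=> hD; rewrite -{1}(emb_pr v) emb_split !mulmxDl !(linD pr2_lin) !linearD /=.
rewrite /DL (mx_ofE (DL_lin D)).
have -> : lsubmx (pr2 (emb (pr1 v) 0 0 *m D)) = 0.
  by apply/AL; apply: (sH hL hD).
have -> : lsubmx (pr2 (emb 0 0 (pr3 v) *m D)) = 0.
  by apply/AL; apply: inC1_pr2; apply: der_inC1 => //; apply: emb3_C1.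
by rewrite add0r addr0.
Qed.

Lemma lsub_der (M : lieb K) (hM : adapted M) (E : 'M[K]_(lg M + lr M)) (u u' : V M) :
  is_der E -> lsubmx u = lsubmx u' -> lsubmx (u *m E) = lsubmx (u' *m E).
Proof.
move=> hE he; apply/eqP; rewrite -subr_eq0 -linearB -mulmxBl; apply/eqP.
apply/hM; apply: der_inC1 => //; apply/hM.
by rewrite linearB /= he subrr.
Qed.

Lemma words (v : V G) (w : seq MG) : alld w ->
  exists uH uL, [/\ charseq (size w) uH, charseq (size w) uL,
     lsubmx (pr1 (app v w)) = lsubmx uH & lsubmx (pr2 (app v w)) = lsubmx uL].
Proof.
elim/last_ind: w => [|w D IH]; first by move=> _; exists (pr1 v), (pr2 v).
rewrite -cats1 => /alld_cat [hw [hD _]].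
have [uH [uL [c1 c2 e1 e2]]] := IH hw.
exists (uH *m DH D), (uL *m DL D); rewrite size_cat addn1 app_cat /app /= -/(app _ _).
split.
- by exists (DH D), uH; split => //; apply: DH_der.
- by exists (DL D), uL; split => //; apply: DL_der.
- by rewrite key1 //; apply: lsub_der => //; apply: DH_der.
- by rewrite key2 //; apply: lsub_der => //; apply: DL_der.
Qed.

Lemma charnil_prod : char_nilpotent H -> char_nilpotent L -> char_nilpotent G.
Proof.
move=> [mH hmH] [mL hmL].
have hstd := prod_std hH hL.
case: (hstd) => hlie _ [N hN] _.
apply: (@charnil_of _ G hlie N (maxn mH mL).+1) => // w hw hs v.
have [uH [uL [c1 c2 e1 e2]]] := words v hw.
have h1 : uH = 0 by apply: hmH; apply: (charseq_le _ c1); rewrite hs; lia.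
have h2 : uL = 0 by apply: hmL; apply: (charseq_le _ c2); rewrite hs; lia.
by apply/AG; rewrite lsub_pr e1 e2 h1 h2 !linear0 row_mx0.
Qed.

End Step.

End Main.


Lemma main_gen (K : fieldType) (L1 : lieb K) (Ls : seq (lieb K)) :
  (forall k : nat, (k < size (L1 :: Ls))%N ->
     let L := nth L1 (L1 :: Ls) k in
     std_lie L /\ char_nilpotent L /\ S_algebra L) ->
  let G := iter_prodg L1 Ls in std_lie G /\ char_nilpotent G /\ S_algebra G.
Proof.
elim/last_ind: Ls => [|s L IH] hyp /=; first exact: (hyp 0%N).
rewrite /iter_prodg foldl_rcons -/(iter_prodg L1 s).
have hs : forall k, (k < size (L1 :: s))%N ->
    let L0 := nth L1 (L1 :: s) k in std_lie L0 /\ char_nilpotent L0 /\ S_algebra L0.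
  move=> k hk; have := hyp k; rewrite -rcons_cons nth_rcons hk; apply.
  by rewrite /= size_rcons; move: hk => /=; lia.
have hL : std_lie L /\ char_nilpotent L /\ S_algebra L.
  have := hyp (size (L1 :: s)); rewrite -rcons_cons nth_rcons ltnn eqxx; apply.
  by rewrite /= size_rcons.
have [gS [gC gA]] := IH hs.
case: hL => lS [lC lA].
split; first exact: prod_std.
split; first exact: charnil_prod.
exact: S_prod.
Qed.


Unset Implicit Arguments.
Local Open Scope complex_scope.

(* g_1 = L1, (g_2,...,g_n) = Ls, over the complex numbers R[i] *)
Theorem mainTheorem11 (R : realType) (L1 : lieb R[i]) (Ls : seq (lieb R[i])) :
  (forall k : nat, (k < size (L1 :: Ls))%N ->
     let L := nth L1 (L1 :: Ls) k in
     std_lie L /\ char_nilpotent L /\ S_algebra L) ->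
  char_nilpotent (iter_prodg L1 Ls).
Proof.
move=> h; have := @main_gen _ L1 Ls h; by case=> _ [].
Qed.
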